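(* Let $A$ be a non-empty set, $I$ a non-empty index set, $\{V_i\}_{i\in I}\subseteq\mathcal R(A)$, ${\cal A}=(A,I,V_i)$, and let $E,F$ be fuzzy equivalences on $A$ with $E\le F$. Then the fuzzy relation $F/E$ on $A/E$ given by $F/E(E_{a_1},E_{a_2})=F(a_1,a_2)$ for all $a_1,a_2\in A$ is a well-defined fuzzy equivalence on $A/E$, and the quotient fuzzy relational systems $({\cal A}/E)/(F/E)$ and ${\cal A}/F$ are isomorphic.
   Context: $\mathcal L=(L,\wedge,\vee,\otimes,\to,0,1)$ is a complete residuated lattice. For a non-empty set $X$, $\mathcal R(X)$ is the set of fuzzy relations $X\times X\to L$, ordered pointwise; $(R\circ S)(x,z)=\bigvee_{y}R(x,y)\otimes S(y,z)$. A fuzzy equivalence $E$ on $X$ is reflexive ($E(x,x)=1$), symmetric and transitive ($E(x,y)\otimes E(y,z)\le E(x,z)$). $E_x(y)=E(x,y)$ and $X/E=\{E_x:x\in X\}$. A fuzzy relational system is ${\cal X}=(X,I,V_i)$ with $\{V_i\}_{i\in I}\subseteq\mathcal R(X)$; its quotient with respect to a fuzzy equivalence $E$ is ${\cal X}/E=(X/E,I,V_i^{X/E})$ where $V_i^{X/E}(E_{x_1},E_{x_2})=(E\circ V_i\circ E)(x_1,x_2)$ (well defined). Two systems $(X,I,V_i)$, $(Y,I,W_i)$ are isomorphic if there is a bijection $\varphi:X\to Y$ with $V_i(x_1,x_2)=W_i(\varphi(x_1),\varphi(x_2))$ for all $x_1,x_2\in X$, $i\in I$. *)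

(* Defs.v *)
From Stdlib Require Import ClassicalEpsilon.
Set Implicit Arguments.

Record CRL := {
  car :> Type;
  le : car -> car -> Prop;
  le_refl : forall x, le x x;
  le_antisym : forall x y, le x y -> le y x -> x = y;
  le_trans : forall x y z, le x y -> le y z -> le x z;
  sup : (car -> Prop) -> car;
  sup_ub : forall (S : car -> Prop) x, S x -> le x (sup S);
  sup_least : forall (S : car -> Prop) u, (forall x, S x -> le x u) -> le (sup S) u;
  meet : car -> car -> car;
  meet_l : forall x y, le (meet x y) x;
  meet_r : forall x y, le (meet x y) y;
  meet_glb : forall x y z, le z x -> le z y -> le z (meet x y);
  join : car -> car -> car;
  join_l : forall x y, le x (join x y);
  join_r : forall x y, le y (join x y);
  join_lub : forall x y z, le x z -> le y z -> le (join x y) z;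
  zero : car;
  one : car;
  zero_least : forall x, le zero x;
  one_greatest : forall x, le x one;
  tens : car -> car -> car;
  tens_assoc : forall x y z, tens x (tens y z) = tens (tens x y) z;
  tens_comm : forall x y, tens x y = tens y x;
  tens_one : forall x, tens x one = x;
  res : car -> car -> car;
  adjoint : forall x y z, le (tens x y) z <-> le x (res y z)
}.

Definition bigsup (L : CRL) (J : Type) (f : J -> L) : L :=
  sup L (fun t => exists j, t = f j).

Definition frel (L : CRL) (X : Type) := X -> X -> L.

Definition rle (L : CRL) (X : Type) (R S : frel L X) : Prop :=
  forall x y, le L (R x y) (S x y).

Definition comp (L : CRL) (X : Type) (R S : frel L X) : frel L X :=
  fun x z => @bigsup L X (fun y : X => tens L (R x y) (S y z)).

Definition fuzzy_equivalence (L : CRL) (X : Type) (E : frel L X) : Prop :=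
  (forall x, E x x = one L) /\
  (forall x y, E x y = E y x) /\
  (forall x y z, le L (tens L (E x y) (E y z)) (E x z)).

(** The quotient set X/E = { E_x : x in X }, as a subtype of X -> L. *)
Definition quot (L : CRL) (X : Type) (E : frel L X) : Type :=
  { f : X -> L | exists x, f = E x }.

Definition cls (L : CRL) (X : Type) (E : frel L X) (x : X) : quot E :=
  exist _ (E x) (ex_intro _ x eq_refl).

Definition rep (L : CRL) (X : Type) (E : frel L X) (p : quot E) : X :=
  proj1_sig (constructive_indefinite_description _ (proj2_sig p)).

Record frs (L : CRL) (I : Type) := {
  carrier : Type;
  rels : I -> frel L carrier
}.

(** Quotient system X/E: V_i^{X/E}(E_x1, E_x2) = (E o V_i o E)(x1, x2),
    computed via chosen representatives. *)
Definition quot_sys (L : CRL) (I : Type) (S : frs L I) (E : frel L (carrier S))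
  : frs L I :=
  {| carrier := quot E;
     rels := fun i p q => comp (comp E (rels S i)) E (rep p) (rep q) |}.

Definition quot_rel (L : CRL) (X : Type) (E F : frel L X) : frel L (quot E) :=
  fun p q => F (rep p) (rep q).

Definition isomorphic (L : CRL) (I : Type) (S T : frs L I) : Prop :=
  exists phi : carrier S -> carrier T,
    (forall x y, phi x = phi y -> x = y) /\
    (forall y, exists x, phi x = y) /\
    (forall i x1 x2, rels S i x1 x2 = rels T i (phi x1) (phi x2)).

(* Main.v *)
Require Import Defs.
From Stdlib Require Import ClassicalEpsilon FunctionalExtensionality ProofIrrelevance.
Set Implicit Arguments.

Lemma tens_mono_l (L : CRL) (a b c : L) : le L a b -> le L (tens L a c) (tens L b c).
Proof.
  intros H. apply adjoint. eapply le_trans; [exact H|]. apply adjoint. apply le_refl.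
Qed.

Lemma tens_mono (L : CRL) (a b c d : L) : le L a b -> le L c d -> le L (tens L a c) (tens L b d).
Proof.
  intros H1 H2. eapply le_trans. apply tens_mono_l; exact H1.
  rewrite (tens_comm L b c), (tens_comm L b d). apply tens_mono_l; exact H2.
Qed.

Lemma one_tens (L : CRL) (a : L) : tens L (one L) a = a.
Proof. rewrite tens_comm. apply tens_one. Qed.

Lemma one_le (L : CRL) (a : L) : le L (one L) a -> a = one L.
Proof. intros H. apply le_antisym; [apply one_greatest|exact H]. Qed.

Lemma bigsup_ub (L : CRL) (J : Type) (f : J -> L) j : le L (f j) (bigsup L f).
Proof. apply sup_ub. exists j; reflexivity. Qed.

Lemma bigsup_least (L : CRL) (J : Type) (f : J -> L) u :
  (forall j, le L (f j) u) -> le L (bigsup L f) u.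
Proof. intros H. apply sup_least. intros x [j ->]. apply H. Qed.

Lemma bigsup_le (L : CRL) (J K : Type) (f : J -> L) (g : K -> L) :
  (forall j, exists k, le L (f j) (g k)) -> le L (bigsup L f) (bigsup L g).
Proof.
  intros H. apply bigsup_least. intros j. destruct (H j) as [k Hk].
  eapply le_trans; [exact Hk| apply bigsup_ub].
Qed.

Lemma sup_tens_r (L : CRL) (J : Type) (f : J -> L) c :
  tens L (bigsup L f) c = bigsup L (fun j => tens L (f j) c).
Proof.
  apply le_antisym.
  - apply adjoint. apply bigsup_least. intros j. apply adjoint.
    apply (@bigsup_ub _ _ (fun j => tens L (f j) c)).
  - apply bigsup_least. intros j. apply tens_mono_l. apply bigsup_ub.
Qed.

Lemma sup_tens_l (L : CRL) (J : Type) (f : J -> L) c :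
  tens L c (bigsup L f) = bigsup L (fun j => tens L c (f j)).
Proof.
  rewrite tens_comm, sup_tens_r. f_equal. apply functional_extensionality.
  intros; apply tens_comm.
Qed.

Lemma comp_assoc (L : CRL) (X : Type) (R S T : frel L X) :
  comp (comp R S) T = comp R (comp S T).
Proof.
  apply functional_extensionality; intro x. apply functional_extensionality; intro w.
  unfold comp.
  apply le_antisym.
  - apply bigsup_least. intro z. rewrite sup_tens_r. apply bigsup_least. intro y.
    eapply le_trans; [|apply (@bigsup_ub _ _ _ y)]. simpl.
    rewrite <- tens_assoc. apply tens_mono. apply le_refl.
    apply (@bigsup_ub _ _ (fun z => tens L (S y z) (T z w)) z).
  - apply bigsup_least. intro y. rewrite sup_tens_l. apply bigsup_least. intro z.
    eapply le_trans; [|apply (@bigsup_ub _ _ _ z)]. simpl.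
    rewrite tens_assoc. apply tens_mono. 2: apply le_refl.
    apply (@bigsup_ub _ _ (fun y => tens L (R x y) (S y z)) y).
Qed.

Lemma rep_spec (L : CRL) (X : Type) (E : frel L X) (p : quot E) : proj1_sig p = E (rep p).
Proof.
  unfold rep. destruct (constructive_indefinite_description _ _). simpl. exact e.
Qed.

Lemma rep_cls (L : CRL) (X : Type) (E : frel L X) x : E (rep (cls E x)) = E x.
Proof. rewrite <- rep_spec. reflexivity. Qed.

Lemma sig_eq (T : Type) (P : T -> Prop) (x y : sig P) : proj1_sig x = proj1_sig y -> x = y.
Proof.
  destruct x, y; simpl; intros; subst. f_equal. apply proof_irrelevance.
Qed.

Lemma eq1_fun (L : CRL) (X : Type) (F : frel L X) : fuzzy_equivalence F ->
  forall x y, F x y = one L -> F x = F y.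
Proof.
  intros [R [S T]] x y H. apply functional_extensionality; intro z.
  apply le_antisym.
  - specialize (T y x z). rewrite S, H, one_tens in T. exact T.
  - specialize (T x y z). rewrite H, one_tens in T. exact T.
Qed.

Lemma EF_fun (L : CRL) (X : Type) (E F : frel L X) :
  fuzzy_equivalence E -> fuzzy_equivalence F -> rle E F ->
  forall x y, E x = E y -> F x = F y.
Proof.
  intros HE HF HEF x y H. apply (eq1_fun HF). apply one_le.
  assert (E x y = one L) by (rewrite H; apply (proj1 HE)).
  rewrite <- H0. apply HEF.
Qed.

Lemma comp_FE (L : CRL) (X : Type) (E F : frel L X) :
  fuzzy_equivalence E -> fuzzy_equivalence F -> rle E F -> comp F E = F.
Proof.
  intros HE HF HEF. apply functional_extensionality; intro x.
  apply functional_extensionality; intro z. unfold comp. apply le_antisym.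
  - apply bigsup_least. intro y. eapply le_trans; [|apply (proj2 (proj2 HF) x y z)].
    apply tens_mono. apply le_refl. apply HEF.
  - eapply le_trans; [|apply (@bigsup_ub _ _ _ z)]. simpl. rewrite (proj1 HE), tens_one. apply le_refl.
Qed.

Lemma comp_EF (L : CRL) (X : Type) (E F : frel L X) :
  fuzzy_equivalence E -> fuzzy_equivalence F -> rle E F -> comp E F = F.
Proof.
  intros HE HF HEF. apply functional_extensionality; intro x.
  apply functional_extensionality; intro z. unfold comp. apply le_antisym.
  - apply bigsup_least. intro y. eapply le_trans; [|apply (proj2 (proj2 HF) x y z)].
    apply tens_mono. apply HEF. apply le_refl.
  - eapply le_trans; [|apply (@bigsup_ub _ _ _ x)]. simpl. rewrite (proj1 HE), one_tens. apply le_refl.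
Qed.

Definition lift (L : CRL) (X : Type) (E : frel L X) (R : frel L X) : frel L (quot E) :=
  fun p q => R (rep p) (rep q).
Arguments lift [L X] E R _ _.

Definition inv1 (L : CRL) (X : Type) (E : frel L X) (R : frel L X) :=
  forall x x', E x = E x' -> R x = R x'.
Definition inv2 (L : CRL) (X : Type) (E : frel L X) (R : frel L X) :=
  forall y y', E y = E y' -> forall x, R x y = R x y'.

Lemma lift_comp (L : CRL) (X : Type) (E R S : frel L X) :
  inv2 E R -> inv1 E S -> comp (lift E R) (lift E S) = lift E (comp R S).
Proof.
  intros H2 H1. apply functional_extensionality; intro p.
  apply functional_extensionality; intro q. unfold comp, lift. apply le_antisym.
  - apply bigsup_le. intro j. exists (rep j). apply le_refl.
  - apply bigsup_le. intro y. exists (cls E y).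
    rewrite (H2 _ _ (rep_cls E y)), (H1 _ _ (rep_cls E y)). apply le_refl.
Qed.

Lemma Finv (L : CRL) (X : Type) (F W : frel L X) : forall x x' y y',
  fuzzy_equivalence F -> F x = F x' -> F y = F y' ->
  comp (comp F W) F x y = comp (comp F W) F x' y'.
Proof.
  intros x x' y y' [_ [Fs _]] Hx Hy. unfold comp. rewrite Hx. f_equal.
  apply functional_extensionality; intro z. rewrite (Fs z y), (Fs z y'), Hy. reflexivity.
Qed.

Theorem theorem6p3 (L : CRL) (A I : Type) (a0 : A) (i0 : I)
  (V : I -> frel L A) (E F : frel L A) :
  fuzzy_equivalence E -> fuzzy_equivalence F -> rle E F ->
  (forall a1 a2 b1 b2 : A, E a1 = E b1 -> E a2 = E b2 -> F a1 a2 = F b1 b2) /\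
  fuzzy_equivalence (@quot_rel L A E F) /\
  isomorphic
    (quot_sys (quot_sys {| carrier := A; rels := V |} E) (@quot_rel L A E F))
    (quot_sys {| carrier := A; rels := V |} F).
Proof.
  intros HE HF HEF.
  pose proof (EF_fun HE HF HEF) as EFf.
  destruct HF as [Fr [Fs Ft]] eqn:HFe. destruct HE as [Er [Es Et]] eqn:HEe.
  assert (wd : forall a1 a2 b1 b2 : A, E a1 = E b1 -> E a2 = E b2 -> F a1 a2 = F b1 b2).
  { intros a1 a2 b1 b2 H1 H2. rewrite (EFf _ _ H1), Fs, (EFf _ _ H2), Fs. reflexivity. }
  split; [exact wd|]. split.
  { unfold quot_rel. split; [|split]; intros; auto. }
  assert (iE1 : inv1 E E) by (intros x x' H; exact H).
  assert (iE2 : inv2 E E) by (intros y y' H x; rewrite (Es x y), (Es x y'), H; reflexivity).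
  assert (iF1 : inv1 E F) by (intros x x' H; apply EFf; exact H).
  assert (iF2 : inv2 E F) by (intros y y' H x; rewrite (Fs x y), (Fs x y'), (EFf _ _ H); reflexivity).
  assert (ic1 : forall R S, inv1 E R -> inv1 E (comp R S)).
  { intros R S H x x' Hx. unfold comp. rewrite (H _ _ Hx). reflexivity. }
  assert (ic2 : forall R S, inv2 E S -> inv2 E (comp R S)).
  { intros R S H y y' Hy x. unfold comp. f_equal. apply functional_extensionality; intro z.
    rewrite (H _ _ Hy). reflexivity. }
  set (phi := fun P : quot (@quot_rel L A E F) => cls F (rep (rep P))).
  exists phi. split; [|split].
  - intros P Q H. apply sig_eq. rewrite !rep_spec.
    unfold phi in H. apply (f_equal (@proj1_sig _ _)) in H. simpl in H.
    exact (f_equal (fun f (q : quot E) => f (rep q)) H).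
  - intros y. set (c := rep y). exists (cls (@quot_rel L A E F) (cls E c)).
    apply sig_eq. rewrite (rep_spec y). fold c. unfold phi. simpl.
    set (P := cls (@quot_rel L A E F) (cls E c)).
    pose proof (rep_spec P) as HP. unfold P at 1 in HP. simpl in HP.
    apply (f_equal (fun f => f (cls E c))) in HP. unfold quot_rel in HP.
    rewrite Fr in HP. symmetry in HP. apply (eq1_fun HF) in HP.
    etransitivity; [exact HP|]. apply EFf. apply rep_cls.
  - intros i P Q. simpl.
    change (@quot_rel L A E F) with (lift E F).
    change (fun p q : quot E => comp (comp E (V i)) E (rep p) (rep q))
      with (lift E (comp (comp E (V i)) E)).
    rewrite lift_comp; [| exact iF2 | apply ic1, ic1, iE1].
    rewrite lift_comp; [| apply ic2; apply ic2; exact iE2 | exact iF1].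
    assert (Heq : comp (comp F (comp (comp E (V i)) E)) F = comp (comp F (V i)) F).
    { rewrite !comp_assoc, !(comp_EF HE HF HEF), <- (comp_assoc F E), (comp_FE HE HF HEF). reflexivity. }
    rewrite Heq. unfold lift, phi.
    apply Finv; [ exact HF | symmetry; apply rep_cls | symmetry; apply rep_cls ].
Qed.
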